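(* Let $G$ be a second countable locally compact abelian group, let $\varLambda\subseteq\varGamma\subseteq G$ be uniformly discrete point sets, and let $\mathcal{A}=(A_n)_n$ be a van Hove sequence such that: (a) $\varLambda\cap A_n$ is eventually nonempty; (b) the counting autocorrelation $\gamma_{\mathrm{count},\varLambda}$ of $\varLambda$ exists with respect to $\mathcal{A}$; (c) $\lim_{n\to\infty}\frac{\mathrm{card}(\varLambda\cap A_n)}{\mathrm{card}(\varGamma\cap A_n)}=1$. Then the counting autocorrelation $\gamma_{\mathrm{count},\varGamma}$ of $\varGamma$ exists with respect to $\mathcal{A}$ and $\gamma_{\mathrm{count},\varGamma}=\gamma_{\mathrm{count},\varLambda}$.
   Context: Uniformly discrete: there is a nonempty open $U$ such that each translate $t+U$ contains at most one point of the set. A van Hove sequence is a sequence of compact sets $A_n$ of positive Haar measure with $\mathrm{vol}(\partial^K A_n)/\mathrm{vol}(A_n)\to0$ for all compact $K$, where $\partial^K A=((A+K)\setminus A^\circ)\cup((\overline{G\setminus A}-K)\cap A)$. For finite $F$, $\gamma_F=\frac{1}{\mathrm{card}(F)}\sum_{x,y\in F}\delta_{x-y}$ if $F\ne\emptyset$, $\gamma_\emptyset=0$; the counting autocorrelation of $X$ is the vague limit of $\gamma_{X\cap A_n}$. *)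

(* Defs.v *)
From HB Require Import structures.
From mathcomp Require Import all_boot all_order all_algebra.
From mathcomp Require Import all_classical all_reals all_analysis.
From mathcomp Require Import finmap.
From mathcomp.real_closed Require Import complex.
Set Implicit Arguments. Unset Strict Implicit. Unset Printing Implicit Defensive.
Import Order.TTheory GRing.Theory Num.Theory.
Import numFieldTopology.Exports numFieldNormedType.Exports.
Local Open Scope classical_set_scope.
Local Open Scope ring_scope.

(** Conventions: a "second countable locally compact abelian group" is a
    topologicalZmodType (abelian group with continuous + and -) which is
    Hausdorff, locally compact and second countable. *)
Definition LCA_second_countable (G : topologicalZmodType) : Prop :=
  [/\ hausdorff_space G, locally_compact [set: G] & @second_countable G].

Section Defs.
Context (G : topologicalZmodType).

Definition msum (A K : set G) : set G := [set a + k | a in A & k in K].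
Definition mdiff (B K : set G) : set G := [set b - k | b in B & k in K].

Definition kbdry (K A : set G) : set G :=
  (msum A K `\` interior A) `|` (mdiff (closure (~` A)) K `&` A).

Definition translate (t : G) (U : set G) : set G := [set t + u | u in U].

Definition uniformly_discrete (X : set G) : Prop :=
  exists U : set G, [/\ open U, U !=set0 &
    forall t x y, X x -> X y -> translate t U x -> translate t U y -> x = y].

(** G, pointed by 0 (needed to build the Borel measurable space) *)
Definition pointedG : Type := G.
HB.instance Definition _ := Choice.on pointedG.
HB.instance Definition _ := isPointed.Build pointedG (0 : G).
End Defs.

Definition borelT (G : topologicalZmodType) :=
  g_sigma_algebraType (@open G : set (set (pointedG G))).

(** the complex numbers over R, as a numFieldType (norm = modulus), so that
    they carry their usual (metric) topology *)
Definition Cplx (R : realType) : numFieldType := (R[i] : numFieldType).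

Section Defs2.
Context (R : realType) (G : topologicalZmodType).

(** mu is a Haar measure on the Borel sets of G: a nonzero-on-opens,
    translation invariant Borel measure, finite on compact sets.
    (In a second countable LCH space every such measure is regular,
    so this is exactly a Haar measure.) *)
Definition haar_measure (mu : {measure set (borelT G) -> \bar R}) : Prop :=
  [/\ forall (t : G) (A : set G), measurable (A : set (borelT G)) ->
        mu (translate t A : set (borelT G)) = mu (A : set (borelT G)),
      forall K : set G, compact K -> (mu (K : set (borelT G)) < +oo)%E &
      forall U : set G, open U -> U !=set0 -> (0 < mu (U : set (borelT G)))%E].

Definition van_Hove (mu : {measure set (borelT G) -> \bar R}) (A : nat -> set G)
  : Prop :=
  (forall n, compact (A n) /\ (0 < mu (A n : set (borelT G)))%E) /\
  (forall K : set G, compact K ->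
     (fine (mu (kbdry K (A n) : set (borelT G))) /
      fine (mu (A n : set (borelT G))))
       @[n --> \oo] --> (0 : R)).

(** number of elements of a (finite) set; here only applied to sets of the
    form X ∩ A_n, which are finite (X uniformly discrete, A_n compact) *)
Definition card_set (F : set G) : nat := #|` fset_set F|.

Definition Cc (f : G -> Cplx R) : Prop :=
  continuous f /\ compact (closure [set x | f x != 0]).

Definition gammaF (F : set G) (f : G -> Cplx R) : Cplx R :=
  if card_set F == 0%N then 0
  else (card_set F)%:R^-1 * \sum_(x <- fset_set F) \sum_(y <- fset_set F) f (x - y).

(** gamma is the vague limit of the measures gamma_{X ∩ A_n}, i.e. the
    counting autocorrelation of X w.r.t. A (measures being identified with
    the linear functionals on C_c(G) they define). *)
Definition is_count_autocorr (X : set G) (A : nat -> set G)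
  (gamma : (G -> Cplx R) -> Cplx R) : Prop :=
  forall f, Cc f -> gammaF (X `&` A n) f @[n --> \oo] --> gamma f.
End Defs2.

(* Main.v *)
Require Import Defs.
From HB Require Import structures.
From mathcomp Require Import all_boot all_order all_algebra.
From mathcomp Require Import all_classical all_reals all_analysis.
From mathcomp Require Import finmap.
From mathcomp.real_closed Require Import complex.
Import Order.TTheory GRing.Theory Num.Theory.
Import numFieldTopology.Exports numFieldNormedType.Exports.
Local Open Scope classical_set_scope.
Local Open Scope ring_scope.

HB.instance Definition _ (G : topologicalZmodType) := Topological.copy (pointedG G) G.
Section H.
Context (G : topologicalZmodType).

Lemma translate_open (U : set G) s : open U -> open (translate s U).
Proof.
move=> oU.
have -> : translate s U = (fun x => x - s) @^-1` U.
  apply/seteqP; split => x /=.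
    by case=> u Uu <-; rewrite addrC addKr.
  by move=> Ux; exists (x - s) => //; rewrite addrC subrK.
apply: open_comp => // x _.
apply: (@continuous_comp _ _ _ (fun x => (x, s)) (fun x : G * G => x.1 - x.2)).
  by apply: cvg_pair; [exact: cvg_id|exact: cvg_cst].
exact: sub_continuous.
Qed.

Lemma fin_cover (K : set G) (O : G -> set G) : compact K ->
  (forall x, K x -> open (O x) /\ O x x) ->
  exists ts : seq G, uniq ts /\ (forall t, t \in ts -> K t) /\
     (forall y, K y -> exists2 t, t \in ts & O t y).
Proof.
move=> cK0 hO.
have cK : @cover_compact (pointedG G) K.
  by have := @compact_cover (pointedG G); move=> E; rewrite -E.
have [D DK KD] : finite_subset_cover K O K.
  apply: cK; first by move=> x /hO[].
  by move=> y Ky; exists y => //; have [] := hO y Ky.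
exists (enum_fset D); split; first exact: fset_uniq.
split.
  move=> t tD; have := DK t tD.
  by rewrite in_setE.
by move=> y /KD [t tD Oty]; exists t.
Qed.
End H.

Lemma sum_cst_seq (T : Type) (V : nmodType) (r : seq T) (c : V) :
  \sum_(i <- r) c = c *+ size r.
Proof. by elim: r => [|a r IH]; rewrite ?big_nil ?big_cons ?IH ?mulrS. Qed.

Lemma lerMn_mono (K : numDomainType) (M : K) (m n : nat) :
  0 <= M -> (m <= n)%N -> M *+ m <= M *+ n.
Proof.
move=> M0 mn; rewrite -(subnKC mn) mulrnDr lerDl.
exact: mulrn_wge0.
Qed.

Section H2.
Context (G : topologicalZmodType).

Lemma count_le (X U : set G) (ts s : seq G) :
  (forall t x y, X x -> X y -> translate t U x -> translate t U y -> x = y) ->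
  uniq s -> (forall y, y \in s -> X y /\ exists2 t, t \in ts & translate t U y) ->
  (size s <= size ts)%N.
Proof.
move=> hX us hs.
pose phi y := xget 0 [set t | t \in ts /\ translate t U y].
have phiP y : y \in s -> phi y \in ts /\ translate (phi y) U y.
  move=> ys; have [_ [t tts tU]] := hs y ys.
  by apply: (xgetPex 0 (P := [set t | t \in ts /\ translate t U y])); exists t.
rewrite -(size_map phi); apply: uniq_leq_size.
  rewrite map_inj_in_uniq // => y y' ys ys' e.
  have [Xy _] := hs y ys; have [Xy' _] := hs y' ys'.
  have [_ h1] := phiP y ys; have [_ h2] := phiP y' ys'.
  by apply: (hX (phi y)) => //; rewrite e.
by move=> t /mapP[y ys ->]; have [] := phiP y ys.
Qed.

Lemma sum_bound (K : numDomainType) (X U : set G) (ts s : seq G) (h : G -> K) (M : K) :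
  (forall t x y, X x -> X y -> translate t U x -> translate t U y -> x = y) ->
  uniq s -> (forall y, y \in s -> X y) -> (forall y, `|h y| <= M) ->
  (forall y, h y != 0 -> exists2 t, t \in ts & translate t U y) ->
  \sum_(y <- s) `|h y| <= M *+ size ts.
Proof.
move=> hX us sX hM hts.
rewrite (bigID (fun y => h y != 0)) /=.
rewrite [X in _ + X]big1 => [|y]; last by rewrite negbK => /eqP ->; rewrite normr0.
rewrite addr0 -big_filter.
apply: (@le_trans _ _ (\sum_(y <- [seq y <- s | h y != 0]) M)).
  by apply: ler_sum => y _; apply: hM.
rewrite sum_cst_seq; apply: lerMn_mono.
  exact: le_trans (normr_ge0 _) (hM 0).
apply: (@count_le X U ts [seq y <- s | h y != 0] hX); first exact: filter_uniq.
move=> y /[!mem_filter] /andP[hy ys]; split; first exact: sX.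
exact: hts.
Qed.
End H2.

Section H3.
Context (T : eqType) (K : numDomainType).

Lemma sum_sub (E F : seq T) (H : T -> K) :
  uniq E -> uniq F -> {subset F <= E} ->
  \sum_(x <- E | x \in F) H x = \sum_(x <- F) H x.
Proof.
move=> uE uF FE; rewrite -big_filter; apply: perm_big.
apply: uniq_perm; first exact: filter_uniq.
  exact: uF.
by move=> x; rewrite mem_filter andb_idr // => /FE.
Qed.

Lemma count_notin (E F : seq T) :
  uniq E -> uniq F -> {subset F <= E} ->
  count (fun x => x \notin F) E = (size E - size F)%N.
Proof.
move=> uE uF FE.
have h1 : count (fun x => x \in F) E = size F.
  rewrite -size_filter; apply: perm_size; apply: uniq_perm; first exact: filter_uniq.
    exact: uF.
  by move=> x; rewrite mem_filter andb_idr // => /FE.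
have := count_predC (fun x => x \in F) E; rewrite h1 => <-.
by rewrite addKn.
Qed.

Lemma sum_cst_pred (E : seq T) (P : pred T) (c : K) :
  \sum_(x <- E | P x) c = c *+ count P E.
Proof. by rewrite -big_filter sum_cst_seq size_filter. Qed.

Lemma split_bound (E F : seq T) (g : T -> T -> K) (B : K) :
  uniq E -> uniq F -> {subset F <= E} ->
  (forall x, \sum_(y <- E) `|g x y| <= B) ->
  (forall y, \sum_(x <- E) `|g x y| <= B) ->
  `| \sum_(x <- E) \sum_(y <- E) g x y - \sum_(x <- F) \sum_(y <- F) g x y |
    <= (B + B) *+ (size E - size F).
Proof.
move=> uE uF FE h1 h2.
rewrite (bigID (fun x => x \in F)) /= sum_sub //.
have -> : \sum_(x <- F) \sum_(y <- E) g x y =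
   \sum_(x <- F) \sum_(y <- F) g x y + \sum_(x <- F) \sum_(y <- E | y \notin F) g x y.
  rewrite -big_split /=; apply: eq_bigr => x _.
  by rewrite (bigID (fun y => y \in F)) /= sum_sub.
have e : forall a b c : K, a + b + c - a = c + b by move=> a b c; rewrite -addrA addrC addrA subrK.
rewrite e mulrnDl -count_notin //.
apply: (le_trans (ler_normD _ _)); apply: lerD.
  apply: (le_trans (ler_norm_sum _ _ _)).
  rewrite -sum_cst_pred; apply: ler_sum => x _.
  exact: le_trans (ler_norm_sum _ _ _) (h1 x).
apply: (le_trans (ler_norm_sum _ _ _)).
apply: (@le_trans _ _ (\sum_(x <- F) \sum_(y <- E | y \notin F) `|g x y|)).
  by apply: ler_sum => x _; apply: ler_norm_sum.
rewrite exchange_big /= -sum_cst_pred; apply: ler_sum => y _.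
apply: le_trans (h2 y).
rewrite -(@sum_sub E F) // [X in _ <= X](bigID (fun x => x \in F)) /= lerDl.
by apply: sumr_ge0 => x _.
Qed.
End H3.

Section CC.
Context (R : realType).
Local Open Scope complex_scope.

Lemma normC_real (x : R) : `|(x%:C : Cplx R)| = (`|x|)%:C.
Proof. by rewrite normc_def /= expr0n /= addr0 sqrtr_sqr. Qed.

Lemma cvgC (u : nat -> R) (l : R) :
  u n @[n --> \oo] --> l -> ((u n)%:C : Cplx R) @[n --> \oo] --> (l%:C : Cplx R).
Proof.
move=> hu; apply/cvgrPdist_lt => e e0.
have Ie : complex.Im e = 0 by apply: ger0_Im; apply: ltW.
have Re0 : 0 < complex.Re e by move: e0; rewrite ltcE => /andP[].
move/cvgrPdist_lt: hu => /(_ _ Re0); apply: filterS => n hn.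
rewrite -rmorphB normC_real ltcE /= Ie eqxx /=.
exact: hn.
Qed.
End CC.

Section M.
Context (R : realType) (G : topologicalZmodType).

Lemma Cc_bounded (f : G -> Cplx R) : Cc f -> exists M : Cplx R, forall x, `|f x| <= M.
Proof.
case=> cf cS.
pose O t := f @^-1` ball (f t) 1.
have hO : forall x, closure [set x | f x != 0] x -> open (O x) /\ O x x.
  move=> x _; split; last exact: ballxx.
  by apply: open_comp; [move=> y _; exact: cf|exact: ball_open].
have [ts [uts [_ hts]]] := @fin_cover G _ O cS hO.
exists (\sum_(t <- ts) (`|f t| + 1)) => x.
have M0 : 0 <= \sum_(t <- ts) (`|f t| + 1) by apply: sumr_ge0 => t _; rewrite addr_ge0.
have [/eqP ->|fx0] := boolP (f x == 0); first by rewrite normr0.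
have [t tts] := hts x (@subset_closure G [set x | f x != 0] x fx0).
move=> hb0; have hb : `|f t - f x| < 1 by move: hb0; rewrite /O /= -ball_normE.
rewrite (bigD1_seq t) //=.
apply: (@le_trans _ _ (`|f t| + 1)); last first.
  by rewrite lerDl sumr_ge0 // => i _; rewrite addr_ge0.
have -> : f x = f t - (f t - f x) by rewrite opprB addrC subrK.
by apply: le_trans (ler_normB _ _) _; rewrite lerD2l ltW.
Qed.
End M.

Lemma translate_shift (G : topologicalZmodType) (U : set G) t x y :
  translate t U (y - x) -> translate (x + t) U y.
Proof. by case=> u Uu e; exists u => //; rewrite -addrA e addrC subrK. Qed.

Section RB.
Context (R : realType) (G : topologicalZmodType).

Lemma row_bounds (f : G -> Cplx R) (X U : set G) (u0 : G) :
  (forall t x y, X x -> X y -> translate t U x -> translate t U y -> x = y) ->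
  open U -> U u0 -> Cc f ->
  exists B : Cplx R,
  (forall E : seq G, uniq E -> (forall y, y \in E -> X y) ->
     forall x, \sum_(y <- E) `|f (x - y)| <= B) /\
  (forall E : seq G, uniq E -> (forall y, y \in E -> X y) ->
     forall y, \sum_(x <- E) `|f (x - y)| <= B).
Proof.
move=> hU oU Uu0 Cf.
have [M hM] := @Cc_bounded R G f Cf.
have M0 : 0 <= M := le_trans (normr_ge0 _) (hM 0).
case: Cf => cf cS.
pose O t := translate (t - u0) U.
have hO : forall (K : set G) x, K x -> open (O x) /\ O x x.
  move=> K x _; split; first exact: translate_open.
  by exists u0 => //; rewrite subrK.
have cSm : compact [set - s | s in closure [set x | f x != 0]].
  apply: continuous_compact => //; apply: continuous_subspaceT => x.
  exact: opp_continuous.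
have [ts1 [_ [_ h1]]] := @fin_cover G _ O cSm (hO _).
have [ts2 [_ [_ h2]]] := @fin_cover G _ O cS (hO _).
exists (M *+ (size ts1 + size ts2)); split.
- move=> E uE EX x.
  apply: le_trans (@sum_bound G (Cplx R) X U (map (fun t => x + (t - u0)) ts1) E
     (fun y => f (x - y)) M hU uE EX (fun y => hM _) _) _.
    move=> y fy.
    have Sy := @subset_closure G [set x | f x != 0] _ fy.
    have [t tts Ot] := h1 (y - x) (ex_intro2 _ _ (x - y) Sy (opprB _ _)).
    exists (x + (t - u0)); first exact: map_f.
    exact: translate_shift.
  by rewrite size_map; apply: lerMn_mono => //; apply: leq_addr.
- move=> E uE EX y.
  apply: le_trans (@sum_bound G (Cplx R) X U (map (fun t => y + (t - u0)) ts2) E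
     (fun x => f (x - y)) M hU uE EX (fun x => hM _) _) _.
    move=> x fx.
    have Sx := @subset_closure G [set x | f x != 0] _ fx.
    have [t tts Ot] := h2 (x - y) Sx.
    exists (y + (t - u0)); first exact: map_f.
    exact: translate_shift.
  by rewrite size_map; apply: lerMn_mono => //; apply: leq_addl.
Qed.
End RB.

Lemma fset_set_inf (T : choiceType) (A : set T) : ~ finite_set A -> fset_set A = fset0.
Proof. by rewrite /fset_set; case: pselect. Qed.

Section Key.
Context (R : realType) (G : topologicalZmodType).
Local Open Scope complex_scope.

Lemma key (L Gm : set G) (f : G -> Cplx R) (B : Cplx R) :
  L `<=` Gm ->
  (forall E : seq G, uniq E -> (forall y, y \in E -> Gm y) ->
     forall x, \sum_(y <- E) `|f (x - y)| <= B) ->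
  (forall E : seq G, uniq E -> (forall y, y \in E -> Gm y) ->
     forall y, \sum_(x <- E) `|f (x - y)| <= B) ->
  (0 < (card_set L)%:R / (card_set Gm)%:R :> R)%R ->
  `| gammaF Gm f - (((card_set L)%:R / (card_set Gm)%:R : R)%:C) * gammaF L f |
     <= (B + B) * (1 - (((card_set L)%:R / (card_set Gm)%:R : R)%:C)).
Proof.
move=> LG hB1 hB2 pos.
have a0 : card_set L != 0%N.
  by apply: contraTneq pos => ->; rewrite mul0r ltxx.
have b0 : card_set Gm != 0%N.
  by apply: contraTneq pos => ->; rewrite invr0 mulr0 ltxx.
have finL : finite_set L.
  apply: contrapT => /fset_set_inf e; move: a0; by rewrite /card_set e.
have finG : finite_set Gm.
  apply: contrapT => /fset_set_inf e; move: b0; by rewrite /card_set e.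
set E := enum_fset (fset_set Gm).
set F := enum_fset (fset_set L).
have uE : uniq E := fset_uniq _.
have uF : uniq F := fset_uniq _.
have EG : forall y, y \in E -> Gm y.
  by move=> y; rewrite /E in_fset_set // in_setE.
have FE : {subset F <= E}.
  by move=> y; rewrite /E /F !in_fset_set // !in_setE => /LG.
have ab : (size F <= size E)%N by apply: uniq_leq_size.
rewrite /gammaF (negbTE a0) (negbTE b0).
rewrite rmorphM fmorphV !rmorph_nat.
rewrite /card_set -/E -/F.
set sE := \sum_(x <- E) \sum_(y <- E) f (x - y).
set sF := \sum_(x <- F) \sum_(y <- F) f (x - y).
have a0' : (size F)%:R != 0 :> Cplx R by rewrite pnatr_eq0.
have b0' : (size E)%:R != 0 :> Cplx R by rewrite pnatr_eq0.
have -> : (size F)%:R / (size E)%:R * ((size F)%:R^-1 * sF) = (size E)%:R^-1 * sF :> Cplx R.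
  by rewrite [_ / _]mulrC -mulrA mulVKf.
rewrite -mulrBr normrM normfV normr_nat.
have hb := @split_bound G (Cplx R) E F (fun x y => f (x - y)) B uE uF FE (hB1 E uE EG) (hB2 E uE EG).
apply: le_trans (ler_wpM2l _ hb) _; first by rewrite invr_ge0 ler0n.
rewrite -[(B + B) *+ _]mulr_natr natrB // mulrCA mulrBr mulVf //.
by rewrite [(size E)%:R^-1 * _]mulrC.
Qed.
End Key.


Theorem lemma3p19 (R : realType) (G : topologicalZmodType)
  (mu : {measure set (borelT G) -> \bar R})
  (Lambda Gamma : set G) (A : nat -> set G) :
  LCA_second_countable G ->
  haar_measure mu ->
  uniformly_discrete Lambda -> uniformly_discrete Gamma ->
  Lambda `<=` Gamma ->
  van_Hove mu A ->
  (\forall n \near \oo, (Lambda `&` A n) !=set0) ->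
  forall gammaL : (G -> Cplx R) -> Cplx R,
  is_count_autocorr Lambda A gammaL ->
  ((card_set (Lambda `&` A n))%:R / (card_set (Gamma `&` A n))%:R : R)
     @[n --> \oo] --> (1 : R) ->
  is_count_autocorr Gamma A gammaL.
Proof.
move=> _ _ _ [U [oU [u0 Uu0] hU]] LG _ _ gammaL hL hr f Cf.
have [B [hB1 hB2]] := @row_bounds R G f Gamma U u0 hU oU Uu0 Cf.
pose r n := ((card_set (Lambda `&` A n))%:R / (card_set (Gamma `&` A n))%:R : R).
pose rC n := ((r n)%:C)%C : Cplx R.
have rcv : rC n @[n --> \oo] --> (1 : Cplx R).
  by have := @cvgC R r 1 hr; rewrite rmorph1.
have pos : \forall n \near \oo, (0 < r n)%R by apply: (cvgr_gt 1 hr); rewrite ltr01.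
have ecv : (gammaF (Gamma `&` A n) f - rC n * gammaF (Lambda `&` A n) f)
    @[n --> \oo] --> (0 : Cplx R).
  apply/cvgr0Pnorm_lt => eps eps0.
  have wcv : ((B + B) * (1 - rC n)) @[n --> \oo] --> (0 : Cplx R).
    have h1 : (1 - rC n) @[n --> \oo] --> (1 - 1 : Cplx R).
      exact: (@cvgB _ _ _ _ _ (fun _ => (1 : Cplx R)) rC 1 1 (cvg_cst _) rcv).
    have h2 := cvgM (cvg_cst (B + B)) h1.
    rewrite subrr mulr0 in h2.
    exact: h2.
  near=> n.
  have h1 : `|(B + B) * (1 - rC n)| < eps by near: n; exact: (cvgr0_norm_lt _ wcv _ eps0).
  have h2 : (0 < r n)%R by near: n; exact: pos.
  have LG' : Lambda `&` A n `<=` Gamma `&` A n by move=> x [? ?]; split => //; apply: LG.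
  have hk := (@key R G (Lambda `&` A n) (Gamma `&` A n) f B LG'
     (fun E uE EG => hB1 E uE (fun y yE => (EG y yE).1))
     (fun E uE EG => hB2 E uE (fun y yE => (EG y yE).1)) h2).
  rewrite -/(r n) -/(rC n) in hk.
  rewrite ger0_norm in h1; last exact: le_trans (normr_ge0 _) hk.
  exact: le_lt_trans hk h1.
have h := cvgD ecv (cvgM rcv (hL f Cf)).
rewrite add0r mul1r in h.
suff e : (fun n => gammaF (Gamma `&` A n) f) =
   ((fun n => gammaF (Gamma `&` A n) f - rC n * gammaF (Lambda `&` A n) f) +
     rC \* (fun n => gammaF (Lambda `&` A n) f)).
  by rewrite e; apply: h.
by apply/funext => n /=; rewrite subrK.
Unshelve. all: end_near.
Qed.
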